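(* $\mathrm{add}^{*}(\mathcal{S}pl)=\mathrm{non}^{*}(\mathcal{S}pl)=\omega$. In particular, $\mathcal{S}pl$ is not a $P$-ideal.
   Context: For an infinite $A\subseteq\omega$, let $S(A)$ be the set of all $\sigma\in2^{<\omega}$ such that $\sigma$ is constant on $A\cap\mathrm{dom}(\sigma)$. The splitting ideal $\mathcal{S}pl$ is the ideal on $2^{<\omega}$ generated by the sets $S(A)$, $A\in[\omega]^{\omega}$. For an ideal $\mathcal{J}$ on a countable set $X$: $\mathrm{add}^*(\mathcal{J})=\min\{|\mathcal{F}|:\mathcal{F}\subseteq\mathcal{J}$ and for every $Y\in\mathcal{J}$ there is $F\in\mathcal{F}$ with $F\not\subseteq^{*}Y\}$; $\mathrm{non}^*(\mathcal{J})=\min\{|\mathcal{F}|:\mathcal{F}\subseteq[X]^{\omega}$ and for every $Y\in\mathcal{J}$ there is $F\in\mathcal{F}$ with $F\cap Y$ finite$\}$. A $P$-ideal is an ideal $\mathcal{J}$ such that for every countable $\{A_n\}\subseteq\mathcal{J}$ there is $B\in\mathcal{J}$ with $A_n\subseteq^* B$ for all $n$. *)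

(* Defs.v *)
From HB Require Import structures.
From mathcomp Require Import all_boot.
From mathcomp Require Import boolp classical_sets cardinality.
Set Implicit Arguments. Unset Strict Implicit. Unset Printing Implicit Defensive.
Local Open Scope classical_set_scope.
Local Open Scope card_scope.

(* 2^{<omega} is represented by finite bit sequences [seq bool];
   dom(sigma) = {0, ..., size sigma - 1}. *)

Definition const_on (A : set nat) (s : seq bool) : Prop :=
  forall i j, A i -> A j -> (i < size s)%N -> (j < size s)%N ->
    nth false s i = nth false s j.

Definition S_set (A : set nat) : set (seq bool) := [set s | const_on A s].

(* The splitting ideal: the ideal generated by the S(A), A infinite, i.e.
   all subsets of finite unions of such generators. *)
Definition Spl : set (set (seq bool)) :=
  [set Y | exists (n : nat) (As : nat -> set nat),
     (forall i, (i < n)%N -> infinite_set (As i)) /\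
     Y `<=` \bigcup_(i in [set k | (k < n)%N]) S_set (As i)].

Definition almost_sub (X : Type) (A B : set X) : Prop := finite_set (A `\` B).

Definition add_star_family (X : Type) (J : set (set X)) (F : set (set X)) : Prop :=
  F `<=` J /\ forall Y, J Y -> exists2 A, F A & ~ almost_sub A Y.

Definition non_star_family (X : Type) (J : set (set X)) (F : set (set X)) : Prop :=
  (forall A, F A -> infinite_set A) /\
  forall Y, J Y -> exists2 A, F A & finite_set (A `&` Y).

Definition min_card_is_omega (X : Type) (W : set (set X) -> Prop) : Prop :=
  (exists F, W F /\ F #= [set: nat]) /\ (forall F, W F -> [set: nat] #<= F).

Definition add_star_eq_omega (X : Type) (J : set (set X)) : Prop :=
  min_card_is_omega (add_star_family J).

Definition non_star_eq_omega (X : Type) (J : set (set X)) : Prop :=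
  min_card_is_omega (non_star_family J).

Definition P_ideal (X : Type) (J : set (set X)) : Prop :=
  forall A : nat -> set X, (forall n, J (A n)) ->
    exists2 B, J B & forall n, almost_sub (A n) B.

(* Main.v *)
Require Import Defs.
From mathcomp Require Import all_boot.
From mathcomp Require Import boolp classical_sets cardinality.
From mathcomp Require Import zify.
Set Implicit Arguments. Unset Strict Implicit. Unset Printing Implicit Defensive.
Local Open Scope classical_set_scope.
Local Open Scope card_scope.

Definition sg (n j : nat) : seq bool := nseq n true ++ nseq j false.
Definition Xf (n : nat) : set (seq bool) := range (sg n).

Lemma size_sg n j : size (sg n j) = (n + j)%N.
Proof. by rewrite /sg size_cat !size_nseq. Qed.

Lemma nth_sg n j x : nth false (sg n j) x = (x < n)%N.
Proof.
rewrite /sg nth_cat size_nseq nth_nseq; case: ltnP => // _.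
by rewrite nth_nseq; case: ifP.
Qed.

Lemma sg_inj n : injective (sg n).
Proof. by move=> i j /(congr1 size); rewrite !size_sg; lia. Qed.

Lemma infinite_image_inj T (f : nat -> T) : injective f -> infinite_set (range f).
Proof.
move=> fi fin; apply: infinite_nat.
have : range f #= [set: nat] by apply: inj_card_eq => x y _ _; apply: fi.
by move=> /card_eqPle [_ e]; apply: card_le_finite fin.
Qed.

Lemma Xf_infinite n : infinite_set (Xf n).
Proof. exact/infinite_image_inj/sg_inj. Qed.

Lemma bound_lemma (P : nat -> nat -> Prop) k :
  (forall i m m', P i m -> (m <= m')%N -> P i m') ->
  (forall i, (i < k)%N -> exists m, P i m) ->
  exists m, forall i, (i < k)%N -> P i m.
Proof.
move=> mono; elim: k => [|k IH] H; first by exists 0%N.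
have [m1 Hm1] := IH (fun i ik => H i (ltnW ik)).
have [m2 Hm2] := H k (ltnSn k).
exists (m1 + m2)%N => i; rewrite ltnS leq_eqVlt => /orP[/eqP->|ik].
  by apply: mono Hm2 _; lia.
by apply: mono (Hm1 i ik) _; lia.
Qed.

Lemma infinite_big (B : set nat) n : infinite_set B -> exists c, B c /\ (n <= c)%N.
Proof.
move=> Binf; apply: contrapT => nc; apply: Binf.
apply: (sub_finite_set _ (finite_II n)) => c Bc /=.
by rewrite ltnNge; apply/negP => nc'; apply: nc; exists c.
Qed.

Lemma Xf_sep Y : Spl Y -> exists n, finite_set (Xf n `&` Y).
Proof.
move=> [k [As [Ainf YS]]].
have [n Hn] := @bound_lemma (fun i m => exists a, As i a /\ (a < m)%N) k
  (fun i m m' '(ex_intro a (conj h1 h2)) h3 => ex_intro _ a (conj h1 (leq_trans h2 h3)))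
  (fun i ik => let: ex_intro a h := infinite_setN0 (Ainf i ik) in
     ex_intro _ a.+1 (ex_intro _ a (conj h (ltnSn a)))).
have [N HN] := @bound_lemma (fun i m => exists c, As i c /\ (n <= c)%N /\ (c < m)%N) k
  (fun i m m' '(ex_intro a (conj h1 (conj h0 h2))) h3 =>
      ex_intro _ a (conj h1 (conj h0 (leq_trans h2 h3))))
  (fun i ik => let: ex_intro a (conj h h') := infinite_big n (Ainf i ik) in
     ex_intro _ a.+1 (ex_intro _ a (conj h (conj h' (ltnSn a))))).
exists n; apply: (sub_finite_set _ (finite_image (sg n) (finite_II N))).
move=> s [[j _ <-]] /YS [i /= ik]; rewrite /S_set /= => cst.
exists j => //=; rewrite ltnNge; apply/negP => Nj.
have [a [Aa an]] := Hn i ik; have [c [Ac [nc cN]]] := HN i ik.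
have := cst a c Aa Ac; rewrite !size_sg !nth_sg an.
have -> : (c < n)%N = false by lia.
by move=> h; have := h ltac:(lia) ltac:(lia).
Qed.

Lemma Xf_Spl n : Spl (Xf n).
Proof.
exists 1%N, (fun _ => [set x | (n <= x)%N]); split.
  move=> i _; apply: (@sub_infinite_set _ (range (fun x => n + x)%N)).
    by move=> x [y _ <-] /=; lia.
  by apply: infinite_image_inj => x y; lia.
move=> s [j _ <-]; exists 0%N => //=.
move=> x y nx ny _ _; rewrite !nth_sg; move: nx ny => /= nx ny.
by rewrite !ltnNge nx ny.
Qed.

Lemma infinite_image_inj2 T U (A : set T) (f : T -> U) :
  {in A &, injective f} -> infinite_set A -> infinite_set (f @` A).
Proof.
move=> fi Ainf fin; apply: Ainf.
by have /card_eqPle [_ e] := inj_card_eq fi; apply: card_le_finite fin.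
Qed.

Lemma finite_Sz L : finite_set [set s : seq bool | (size s <= L)%N].
Proof.
elim: L => [|L IH].
  apply: (sub_finite_set _ (finite_set1 [::])) => s /=.
  by rewrite leqn0 => /nilP.
apply: (sub_finite_set (B := [set [::]] `|` (cons true @` [set s : seq bool | (size s <= L)%N])
   `|` (cons false @` [set s : seq bool | (size s <= L)%N]))).
  case=> [|[] s] /= h; [by left; left| left; right | right]; by exists s.
by rewrite !finite_setU; split; [split; [apply: finite_set1|]|]; apply: finite_image.
Qed.

Lemma step (Z : set (seq bool)) L : infinite_set Z ->
  exists c Z', Z' `<=` Z /\ infinite_set Z' /\
     forall s, Z' s -> (L < size s)%N /\ nth false s L = c.
Proof.
move=> Zinf.
have Z1inf := infinite_setD Zinf (finite_Sz L).
have E : Z `\` [set s : seq bool | (size s <= L)%N] =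
   [set s | (Z `\` [set s : seq bool | (size s <= L)%N]) s /\ nth false s L = true] `|`
   [set s | (Z `\` [set s : seq bool | (size s <= L)%N]) s /\ nth false s L = false].
  apply/seteqP; split => s /=.
    by case: (nth false s L) => h; [left|right].
  by case=> -[].
rewrite E finite_setU in Z1inf.
have [c Hc] : exists c, infinite_set
   [set s | (Z `\` [set s : seq bool | (size s <= L)%N]) s /\ nth false s L = c].
  apply: contrapT => hh; apply: Z1inf; split; apply: contrapT => h; apply: hh; by eexists; exact: h.
exists c, [set s | (Z `\` [set s : seq bool | (size s <= L)%N]) s /\ nth false s L = c].
split; first by move=> s [[]].
split => // s [[_ /=]] h1 h2; split => //; lia.
Qed.

Lemma ramsey (X : set (seq bool)) : infinite_set X ->
  exists B, infinite_set B /\ infinite_set (X `&` S_set B).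
Proof.
move=> Xinf.
have /choice [stf Hstf] : forall p : set (seq bool) * nat, exists y : bool * set (seq bool),
  infinite_set p.1 -> y.2 `<=` p.1 /\ infinite_set y.2 /\
     forall s, y.2 s -> (p.2 < size s)%N /\ nth false s p.2 = y.1.
  move=> [Z L] /=; have [Zi|Zf] := pselect (infinite_set Z).
    by have [c [Z' H]] := step L Zi; exists (c, Z').
  by exists (false, set0).
have /choice [pk Hpk] : forall Z : set (seq bool), exists s : seq bool, infinite_set Z -> Z s.
  move=> Z; have [Zi|Zf] := pselect (infinite_set Z).
    by have [s Hs] := infinite_setN0 Zi; exists s.
  by exists [::].
pose nxt (r : set (seq bool) * nat * bool * seq bool) :=
  let L := size r.2 in let t := stf (r.1.1.1, L) in (t.2, L, t.1, pk t.2).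
pose rec j := iter j.+1 nxt (X, 0%N, false, [::]).
pose Zs j := (rec j).1.1.1. pose bs j := (rec j).1.1.2.
pose cs j := (rec j).1.2. pose ss j := (rec j).2.
have recS j : rec j.+1 = nxt (rec j) by [].
have nxtP r : infinite_set r.1.1.1 ->
   let r' := nxt r in
   r'.1.1.2 = size r.2 /\ r'.1.1.1 `<=` r.1.1.1 /\ infinite_set r'.1.1.1 /\
   (forall s, r'.1.1.1 s -> (r'.1.1.2 < size s)%N /\ nth false s r'.1.1.2 = r'.1.2) /\
   r'.1.1.1 r'.2.
  move=> ri /=; have [h1 [h2 h3]] := Hstf (r.1.1.1, size r.2) ri.
  by do 4?split => //; apply: Hpk.
have inv j : infinite_set (Zs j) /\ Zs j `<=` X /\
   (forall s, Zs j s -> (bs j < size s)%N /\ nth false s (bs j) = cs j) /\ Zs j (ss j).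
  elim: j => [|j [IH1 [IH2 [IH3 IH4]]]].
    by have [_ [h2 [h3 [h4 h5]]]] := nxtP (X, 0%N, false, [::]) Xinf.
  have [_ [h2 [h3 [h4 h5]]]] := nxtP (rec j) IH1.
  by split => //; split => //; apply: subset_trans IH2.
have bsS j : bs j.+1 = size (ss j).
  by have [h1 _] := nxtP (rec j) (inv j).1.
have ZsS j : Zs j.+1 `<=` Zs j.
  by have [_ [h2 _]] := nxtP (rec j) (inv j).1.
have Zmono i j : (i <= j)%N -> Zs j `<=` Zs i.
  move=> /subnK <-; elim: (j - i)%N => [|k IH] //=.
  by rewrite addSn; apply: subset_trans (ZsS _) IH.
have bsss j : (bs j < size (ss j))%N.
  by have [_ [_ [h _]]] := inv j; exact: (h _ (inv j).2.2.2).1.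
have bs_lt i j : (i < j)%N -> (bs i < bs j)%N.
  elim: j => [//|j IH]; rewrite ltnS leq_eqVlt => /orP[/eqP->|ij].
    by rewrite bsS.
  by apply: (ltn_trans (IH ij)); rewrite bsS.
have ss_lt i j : (i < j)%N -> (size (ss i) < size (ss j))%N.
  move=> ij; rewrite -bsS; apply: (leq_ltn_trans _ (bsss j)).
  move: ij; rewrite leq_eqVlt => /orP[/eqP->//|]; by move/bs_lt/ltnW.
have [c Jinf] : exists c, infinite_set [set j | cs j = c].
  apply: contrapT => hh; apply: infinite_nat.
  have -> : [set: nat] = [set j | cs j = true] `|` [set j | cs j = false].
    by apply/seteqP; split => j //= _; case: (cs j); [left|right].
  rewrite finite_setU; split; apply: contrapT => h; apply: hh; by eexists; exact: h.
have bs_inj : injective bs.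
  move=> i j; case: (ltngtP i j) => // /bs_lt; lia.
have ss_inj : injective ss.
  move=> i j; case: (ltngtP i j) => // /ss_lt h E; move: h; rewrite E; lia.
exists (bs @` [set j | cs j = c]); split.
  by apply: infinite_image_inj2 => // x y _ _; apply: bs_inj.
apply: (@sub_infinite_set _ (ss @` [set j | cs j = c])); last first.
  by apply: infinite_image_inj2 => // x y _ _; apply: ss_inj.
move=> s [j /= cj <-]; split; first by apply: (inv j).2.1; apply: (inv j).2.2.2.
have key x : (bs @` [set j | cs j = c]) x -> (x < size (ss j))%N -> nth false (ss j) x = c.
  move=> [i /= ci <-] h; rewrite -bsS in h.
  have ij : (i <= j)%N.
    rewrite leqNgt; apply/negP; rewrite leq_eqVlt => /orP[/eqP E|/bs_lt]; last lia.
    by rewrite E in h; lia.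
  by rewrite -ci; apply: ((inv i).2.2.1 _ (Zmono i j ij _ (inv j).2.2.2)).2.
by move=> x y Bx By hx hy; rewrite (key x Bx hx) (key y By hy).
Qed.

Lemma Xf_inj : injective Xf.
Proof.
move=> n m E.
have h1 : Xf m (sg n 0) by rewrite -E; exists 0%N.
have h2 : Xf n (sg m 0) by rewrite E; exists 0%N.
case: h1 => j _ /(congr1 size); case: h2 => k _ /(congr1 size).
rewrite !size_sg; lia.
Qed.

Lemma rangeXf_card : range Xf #= [set: nat].
Proof. by apply: inj_card_eq => x y _ _; apply: Xf_inj. Qed.

Lemma fin_decomp T (A Y : set T) :
  finite_set (A `&` Y) -> finite_set (A `\` Y) -> finite_set A.
Proof.
move=> h1 h2; have -> : A = (A `&` Y) `|` (A `\` Y).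
  by apply/seteqP; split => x /=; [case: (pselect (Y x)) => ?; [left|right]|case=> -[]].
by rewrite finite_setU.
Qed.

Lemma fin_enum (F : set (set (seq bool))) : finite_set F ->
  exists m (f : nat -> set (seq bool)), (forall i, (i < m)%N -> F (f i)) /\
    (forall A, F A -> exists2 i, (i < m)%N & A = f i).
Proof.
move=> [m]; rewrite card_eq_sym => /card_set_bijP [f [hf _ hs]].
exists m, f; split; first by move=> i im; apply: hf.
by move=> A /hs [i /= im <-]; exists i.
Qed.

Lemma Spl_sub A B : A `<=` B -> Spl B -> Spl A.
Proof. by move=> AB [n [As [h1 h2]]]; exists n, As; split => //; apply: subset_trans h2. Qed.

Lemma Spl_U A B : Spl A -> Spl B -> Spl (A `|` B).
Proof.
move=> [n1 [As1 [h1 s1]]] [n2 [As2 [h2 s2]]].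
exists (n1 + n2)%N, (fun i => if (i < n1)%N then As1 i else As2 (i - n1)%N); split.
  move=> i ilt; case: ifP => ih; first by apply: h1.
  by apply: h2; lia.
move=> x [/s1 [i /= ii Hx]|/s2 [i /= ii Hx]].
  by exists i => /=; [lia| rewrite ii].
exists (n1 + i)%N => /=; first lia.
have -> : (n1 + i < n1)%N = false by lia.
by have -> : (n1 + i - n1 = i)%N by lia.
Qed.

Lemma Spl_bigcup m (g : nat -> set (seq bool)) :
  (forall i, (i < m)%N -> Spl (g i)) -> Spl (\bigcup_(i in `I_m) g i).
Proof.
elim: m => [|m IH] H.
  by exists 0%N, (fun _ => set0); split => // x [i /=].
apply: (@Spl_sub _ ((\bigcup_(i in `I_m) g i) `|` g m)).
  move=> x [i /=]; rewrite ltnS leq_eqVlt => /orP[/eqP->|im] gx; first by right.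
  by left; exists i.
apply: Spl_U; last exact: H.
by apply: IH => i im; apply: H; lia.
Qed.

Theorem mainTheorem11 :
  add_star_eq_omega Spl /\ non_star_eq_omega Spl /\ ~ P_ideal Spl.
Proof.
split; [|split].
- split.
    exists (range Xf); split; last exact: rangeXf_card.
    split; first by move=> A [n _ <-]; apply: Xf_Spl.
    move=> Y /Xf_sep [n hn]; exists (Xf n); first by exists n.
    by move=> h; apply: (@Xf_infinite n); apply: fin_decomp hn h.
  move=> F [FS FW]; apply/infiniteP => /fin_enum [m [f [hf hF]]].
  have := FW (\bigcup_(i in `I_m) f i) (Spl_bigcup (fun i im => FS _ (hf i im))).
  move=> [A /hF [i im ->]]; apply.
  apply: (sub_finite_set _ (finite_set0 _)) => x [fx]; apply; by exists i.
- split.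
    exists (range Xf); split; last exact: rangeXf_card.
    split; first by move=> A [n _ <-]; apply: Xf_infinite.
    by move=> Y /Xf_sep [n hn]; exists (Xf n) => //; exists n.
  move=> F [FI FW]; apply/infiniteP => /fin_enum [m [f [hf hF]]].
  have /choice [Bf HB] : forall i, exists B, (i < m)%N ->
      infinite_set B /\ infinite_set (f i `&` S_set B).
    move=> i; have [im|im] := pselect (i < m)%N; last by exists set0.
    by have [B HB] := ramsey (FI _ (hf i im)); exists B.
  have SY : Spl (\bigcup_(i in `I_m) S_set (Bf i)).
    by exists m, Bf; split => // i im; exact: (HB i im).1.
  have [A /hF [i im ->] fin] := FW _ SY.
  apply: (HB i im).2; apply: (sub_finite_set _ fin) => x [fx sx]; split => //.
  by exists i.
- move=> HP; have [B SB HB] := HP Xf Xf_Spl.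
  have [n hn] := Xf_sep SB.
  by apply: (@Xf_infinite n); apply: fin_decomp hn (HB n).
Qed.
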